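(* Fix a $C^0$-concept over a topologized field $\mathbb{K}$. Let $E_1,E_2,F\in\mathcal{M}$, $U\subseteq E_1\times E_2$ open, and $f\colon U\to F$ a $C^0$-map. Let $U_1:=\{(x_1,x_2,v_1,t)\in U\times E_1\times\mathbb{K}:(x_1+tv_1,x_2)\in U\}$ and $U_2:=\{(x_1,x_2,v_2,t)\in U\times E_2\times\mathbb{K}:(x_1,x_2+tv_2)\in U\}$. Suppose there are $C^0$-maps $\frac{\Delta_1f}{\Delta_1}\colon U_1\to F$ and $\frac{\Delta_2f}{\Delta_2}\colon U_2\to F$ such that $\frac{\Delta_1f}{\Delta_1}(x_1,x_2,v_1,t)=\frac{f(x_1+tv_1,x_2)-f(x_1,x_2)}{t}$ for all $(x_1,x_2,v_1,t)\in U_1$ with $t\ne0$, and $\frac{\Delta_2f}{\Delta_2}(x_1,x_2,v_2,t)=\frac{f(x_1,x_2+tv_2)-f(x_1,x_2)}{t}$ for all $(x_1,x_2,v_2,t)\in U_2$ with $t\ne0$. Then $f$ is of class $C^1$ and $$f^{[1]}((x_1,x_2),(v_1,v_2),t)=\frac{\Delta_1f}{\Delta_1}(x_1,x_2,v_1,t)+\frac{\Delta_2f}{\Delta_2}(x_1+tv_1,x_2,v_2,t)$$ for all $(x_1,x_2,v_1,v_2,t)$ in $P:=\{((x_1,x_2),(v_1,v_2),t)\in U^{[1]}:(x_1+tv_1,x_2)\in U\}$.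
   Context: Let $\mathbb{K}$ be a commutative ring with unit (here a field) carrying a topology. A $C^0$-concept over $\mathbb{K}$ consists of: (a) a class $\mathcal{M}$ of topologized $\mathbb{K}$-modules with $\mathbb{K}\in\mathcal{M}$; (b) for $E,F\in\mathcal{M}$ and open $U\subseteq E$, a set $C^0(U,F)$ of continuous maps; (c) for $E_1,E_2\in\mathcal{M}$ a topology on $E_1\times E_2$ (not necessarily the product topology) making it a member of $\mathcal{M}$; subject to: (I.1) composites of $C^0$-maps are $C^0$, identities and inclusions of open subsets are $C^0$; (I.2) $x\mapsto rx+b$ is $C^0$; (I.3) $t\mapsto tv+x$ is $C^0$; (I.4) $\mathbb{K}^\times$ is open and inversion is $C^0$; (I.5) $C^0$ is local on open covers; (II.1) projections and $v\mapsto(v,y)$, $w\mapsto(x,w)$ are $C^0$; (II.2) $f_1\times f_2$ is $C^0$ for $C^0$-maps $f_i$; (II.3) diagonals are $C^0$; (II.4) exchange/associativity maps of products are $C^0$ both ways; (II.5) addition and scalar multiplication are $C^0$; (III) a $C^0$-map on open $U\subseteq\mathbb{K}$ is determined by its values on $U\cap\mathbb{K}^\times$. For open $U\subseteq E$, $U^{[1]}=\{(x,v,t)\in U\times E\times\mathbb{K}:x+tv\in U\}$; a $C^0$-map $f$ is $C^1$ if there is a $C^0$-map $f^{[1]}\colon U^{[1]}\to F$ with $f(x+tv)-f(x)=t\,f^{[1]}(x,v,t)$ on $U^{[1]}$. Here $E=E_1\times E_2$ and points of $U^{[1]}$ are written $((x_1,x_2),(v_1,v_2),t)$. *)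

(* Defs.v *)
From mathcomp Require Import all_boot all_algebra.
Set Implicit Arguments. Unset Strict Implicit. Unset Printing Implicit Defensive.
Import GRing.Theory.
Local Open Scope ring_scope.

Definition set (T : Type) := T -> Prop.
Definition setT {T : Type} : set T := fun _ => True.

Definition is_topology (T : Type) (O : set (set T)) : Prop :=
  [/\ O setT, O (fun _ => False),
      (forall (I : Type) (A : I -> set T), (forall i, O (A i)) ->
          O (fun x => exists i, A i x))
    & (forall A B, O A -> O B -> O (fun x => A x /\ B x))].

(* f (defined on the open set U of E) is continuous into F: preimages of
   open sets of F under f|U are open (in E, equivalently in U). *)
Definition cont_on (S T : Type) (OS : set (set S)) (OT : set (set T))
    (U : set S) (f : S -> T) : Prop :=
  forall V, OT V -> OS (fun x => U x /\ V (f x)).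

Record tmod (K : fieldType) := TMod { tcar :> lmodType K ; topen : set (set tcar) }.
Arguments topen {K} t _.

Definition Ktm (K : fieldType) (OK : set (set K)) : tmod K := @TMod K K^o OK.

(* The type of the "product topology" datum (c): for E1, E2 a topology on E1 x E2
   (not necessarily the product topology). *)
Definition prodtop_t (K : fieldType) :=
  forall E1 E2 : tmod K, set (set (tcar E1 * tcar E2)%type).

Definition tprod (K : fieldType) (pt : prodtop_t K) (E1 E2 : tmod K) : tmod K :=
  @TMod K (tcar E1 * tcar E2)%type (pt E1 E2).

(* Datum (b): C0 E F U f means "f, restricted to the open set U of E, belongs to
   C^0(U,F)".  Maps U -> F are represented by total functions E -> F, only their
   values on U matter (axiom c0_ext). *)
Definition C0_t (K : fieldType) :=
  forall E F : tmod K, set (tcar E) -> (tcar E -> tcar F) -> Prop.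

Record is_C0_concept (K : fieldType) (OK : set (set K)) (inM : tmod K -> Prop)
    (pt : prodtop_t K) (C0 : C0_t K) : Prop := {
  c0_topK : is_topology OK;
  c0_inMK : inM (Ktm OK);
  c0_inMprod : forall E1 E2, inM E1 -> inM E2 -> inM (tprod pt E1 E2);
  c0_top : forall E, inM E -> is_topology (topen E);
  c0_dom : forall E F U f, C0 E F U f ->
     [/\ inM E, inM F, topen E U & cont_on (topen E) (topen F) U f];
  c0_ext : forall E F U f g, C0 E F U f -> (forall x, U x -> f x = g x) ->
     C0 E F U g;
  c0_comp : forall E F G U V (f : tcar E -> tcar F) (g : tcar F -> tcar G),
     C0 E F U f -> C0 F G V g -> (forall x, U x -> V (f x)) ->
     C0 E G U (fun x => g (f x));
  c0_id : forall E U, inM E -> topen E U -> C0 E E U (fun x => x);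
  c0_affine : forall E (r : K) (b : tcar E), inM E ->
     C0 E E setT (fun x => r *: x + b);
  c0_line : forall E (x v : tcar E), inM E ->
     C0 (Ktm OK) E setT (fun t : K => t *: v + x);
  c0_units_open : OK (fun t : K => t != 0);
  c0_inv : C0 (Ktm OK) (Ktm OK) (fun t : K => t != 0) (fun t : K => t^-1);
  c0_local : forall E F (U : set (tcar E)) (f : tcar E -> tcar F)
       (I : Type) (Ui : I -> set (tcar E)),
     inM E -> inM F -> (forall i, topen E (Ui i)) ->
     (forall x, U x <-> exists i, Ui i x) ->
     (forall i, C0 E F (Ui i) f) -> C0 E F U f;
  c0_fst : forall E1 E2, inM E1 -> inM E2 ->
     C0 (tprod pt E1 E2) E1 setT (fun p => p.1);
  c0_snd : forall E1 E2, inM E1 -> inM E2 ->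
     C0 (tprod pt E1 E2) E2 setT (fun p => p.2);
  c0_inl : forall E1 E2 (y : tcar E2), inM E1 -> inM E2 ->
     C0 E1 (tprod pt E1 E2) setT (fun v => (v, y));
  c0_inr : forall E1 E2 (x : tcar E1), inM E1 -> inM E2 ->
     C0 E2 (tprod pt E1 E2) setT (fun w => (x, w));
  c0_prodmap : forall E1 E2 F1 F2 U1 U2
       (f1 : tcar E1 -> tcar F1) (f2 : tcar E2 -> tcar F2),
     C0 E1 F1 U1 f1 -> C0 E2 F2 U2 f2 ->
     C0 (tprod pt E1 E2) (tprod pt F1 F2) (fun p => U1 p.1 /\ U2 p.2)
        (fun p => (f1 p.1, f2 p.2));
  c0_diag : forall E, inM E -> C0 E (tprod pt E E) setT (fun x => (x, x));
  c0_swap : forall E1 E2, inM E1 -> inM E2 ->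
     C0 (tprod pt E1 E2) (tprod pt E2 E1) setT (fun p => (p.2, p.1));
  c0_assoc : forall E1 E2 E3, inM E1 -> inM E2 -> inM E3 ->
     C0 (tprod pt (tprod pt E1 E2) E3) (tprod pt E1 (tprod pt E2 E3)) setT
        (fun p => (p.1.1, (p.1.2, p.2)));
  c0_assocV : forall E1 E2 E3, inM E1 -> inM E2 -> inM E3 ->
     C0 (tprod pt E1 (tprod pt E2 E3)) (tprod pt (tprod pt E1 E2) E3) setT
        (fun p => ((p.1, p.2.1), p.2.2));
  c0_add : forall E, inM E -> C0 (tprod pt E E) E setT (fun p => p.1 + p.2);
  c0_scale : forall E, inM E ->
     C0 (tprod pt (Ktm OK) E) E setT (fun p => p.1 *: p.2);
  c0_det : forall F (U : set K) (f g : K -> tcar F),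
     C0 (Ktm OK) F U f -> C0 (Ktm OK) F U g ->
     (forall t, U t -> t != 0 -> f t = g t) -> forall t, U t -> f t = g t
}.

Definition U1 (K : fieldType) (E : lmodType K) (U : set E) : set ((E * E) * K)%type :=
  fun p => U p.1.1 /\ U (p.1.1 + p.2 *: p.1.2).

Definition is_f1 (K : fieldType) (OK : set (set K)) (pt : prodtop_t K)
    (C0 : C0_t K) (E F : tmod K) (U : set (tcar E))
    (f : tcar E -> tcar F) (f1 : ((tcar E * tcar E) * K)%type -> tcar F) : Prop :=
  C0 (tprod pt (tprod pt E E) (Ktm OK)) F (U1 U) f1 /\
  forall (x v : tcar E) (t : K), U1 U ((x, v), t) ->
    f (x + t *: v) - f x = t *: f1 ((x, v), t).

Definition isC1 (K : fieldType) (OK : set (set K)) (pt : prodtop_t K)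
    (C0 : C0_t K) (E F : tmod K) (U : set (tcar E)) (f : tcar E -> tcar F) : Prop :=
  C0 E F U f /\ exists f1, is_f1 OK pt C0 U f f1.

(* Main.v *)
Require Import Defs.
From mathcomp Require Import all_boot all_algebra.
From Stdlib Require Import FunctionalExtensionality PropExtensionality ClassicalDescription.
Import GRing.Theory.
Local Open Scope ring_scope.


Lemma open_ext {K : fieldType} {E : tmod K} {A B : set (tcar E)} :
  topen E A -> (forall x, A x <-> B x) -> topen E B.
Proof.
move=> HA HAB.
have -> : B = A by apply: functional_extensionality => x; apply: propositional_extensionality; split => /HAB.
exact: HA.
Qed.

Section S.
Context {K : fieldType} {OK : set (set K)} {inM : tmod K -> Prop}
    {pt : prodtop_t K} {C0 : C0_t K} (HC : is_C0_concept OK inM pt C0).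

Lemma c0_open {E F U f} : C0 E F U f -> topen E U.
Proof. by case/(c0_dom HC). Qed.

Lemma c0_dext {E F} {U W : set (tcar E)} {f} : C0 E F U f -> (forall x, U x <-> W x) -> C0 E F W f.
Proof.
move=> Hf HUW.
have -> : W = U by apply: functional_extensionality => x; apply: propositional_extensionality; split => /HUW.
exact: Hf.
Qed.

Lemma c0_restrict {E F U W f} : C0 E F U f -> topen E W -> (forall x, W x -> U x) -> C0 E F W f.
Proof.
move=> Hf HW HWU; have [HE _ _ _] := c0_dom HC Hf.
exact: (c0_comp HC (c0_id HC HE HW) Hf HWU).
Qed.

Lemma open_and {E} {A B : set (tcar E)} : inM E -> topen E A -> topen E B ->
  topen E (fun x => A x /\ B x).
Proof. by move=> HE HA HB; case: (c0_top HC HE) => _ _ _; apply. Qed.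

Lemma c0_compT {E F G} {U : set (tcar F)} {phi : tcar E -> tcar F} {g : tcar F -> tcar G} :
  C0 E F Defs.setT phi -> C0 F G U g -> C0 E G (fun x => True /\ U (phi x)) (fun x => g (phi x)).
Proof.
move=> Hp Hg; have [_ _ _ Hc] := c0_dom HC Hp.
have HW := Hc _ (c0_open Hg).
apply: (c0_comp HC _ Hg); last by move=> x [].
by apply: (c0_restrict Hp HW).
Qed.

Lemma c0_TT {E F G} {phi : tcar E -> tcar F} {g : tcar F -> tcar G} :
  C0 E F Defs.setT phi -> C0 F G Defs.setT g -> C0 E G Defs.setT (fun x => g (phi x)).
Proof. by move=> Hp Hg; apply: (c0_comp HC Hp Hg). Qed.

Lemma c0_pair {E A B U} {f : tcar E -> tcar A} {g : tcar E -> tcar B} :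
  C0 E A U f -> C0 E B U g -> C0 E (tprod pt A B) U (fun x => (f x, g x)).
Proof.
move=> Hf Hg; have [HE _ HU _] := c0_dom HC Hf.
have Hd := c0_restrict (c0_diag HC HE) HU (fun _ _ => I).
exact: (c0_comp HC Hd (c0_prodmap HC Hf Hg)).
Qed.

Lemma c0_addm {E F U} {f g : tcar E -> tcar F} :
  C0 E F U f -> C0 E F U g -> C0 E F U (fun x => f x + g x).
Proof.
move=> Hf Hg; have [_ HF _ _] := c0_dom HC Hf.
exact: (c0_comp HC (c0_pair Hf Hg) (c0_add HC HF)).
Qed.

Lemma c0_scalem {E F U} {s : tcar E -> K} {f : tcar E -> tcar F} :
  C0 E (Ktm OK) U s -> C0 E F U f -> C0 E F U (fun x => s x *: f x).
Proof.
move=> Hs Hf; have [_ HF _ _] := c0_dom HC Hf.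
exact: (c0_comp HC (c0_pair Hs Hf) (c0_scale HC HF)).
Qed.

Lemma c0_subm {E F U} {f g : tcar E -> tcar F} :
  C0 E F U f -> C0 E F U g -> C0 E F U (fun x => f x - g x).
Proof.
move=> Hf Hg; have [_ HF _ _] := c0_dom HC Hf.
have Hn := c0_comp HC Hg (c0_affine HC (-1) 0 HF) (fun _ _ => I).
apply: (c0_ext HC (c0_addm Hf Hn)) => x _ /=.
by rewrite addr0 scaleN1r.
Qed.

End S.

Theorem lemma3p9 (K : fieldType) (OK : set (set K)) (inM : tmod K -> Prop)
    (pt : prodtop_t K) (C0 : C0_t K) (HC : is_C0_concept OK inM pt C0)
    (E1 E2 F : tmod K) (HE1 : inM E1) (HE2 : inM E2) (HF : inM F)
    (U : set (tcar E1 * tcar E2)%type) (HU : topen (tprod pt E1 E2) U)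
    (f : (tcar E1 * tcar E2)%type -> tcar F)
    (Hf : C0 (tprod pt E1 E2) F U f)
    (D1 : (((tcar E1 * tcar E2) * tcar E1) * K)%type -> tcar F)
    (D2 : (((tcar E1 * tcar E2) * tcar E2) * K)%type -> tcar F)
    (HD1 : C0 (tprod pt (tprod pt (tprod pt E1 E2) E1) (Ktm OK)) F
              (fun p => U p.1.1 /\ U (p.1.1.1 + p.2 *: p.1.2, p.1.1.2)) D1)
    (HD2 : C0 (tprod pt (tprod pt (tprod pt E1 E2) E2) (Ktm OK)) F
              (fun p => U p.1.1 /\ U (p.1.1.1, p.1.1.2 + p.2 *: p.1.2)) D2)
    (HD1eq : forall (x1 : tcar E1) (x2 : tcar E2) (v1 : tcar E1) (t : K),
        U (x1, x2) -> U (x1 + t *: v1, x2) -> t != 0 ->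
        D1 (((x1, x2), v1), t) = t^-1 *: (f (x1 + t *: v1, x2) - f (x1, x2)))
    (HD2eq : forall (x1 : tcar E1) (x2 : tcar E2) (v2 : tcar E2) (t : K),
        U (x1, x2) -> U (x1, x2 + t *: v2) -> t != 0 ->
        D2 (((x1, x2), v2), t) = t^-1 *: (f (x1, x2 + t *: v2) - f (x1, x2))) :
  isC1 OK pt C0 (E := tprod pt E1 E2) U f /\
  forall f1 : (((tcar E1 * tcar E2) * (tcar E1 * tcar E2)) * K)%type -> tcar F,
    is_f1 OK pt C0 (E := tprod pt E1 E2) U f f1 ->
    forall (x1 v1 : tcar E1) (x2 v2 : tcar E2) (t : K),
      U1 (E := tcar E1 * tcar E2)%type U (((x1, x2), (v1, v2)), t) ->
      U (x1 + t *: v1, x2) ->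
      f1 (((x1, x2), (v1, v2)), t)
        = D1 (((x1, x2), v1), t) + D2 (((x1 + t *: v1, x2), v2), t).
Proof.
set E := tprod pt E1 E2.
have HE : inM E := c0_inMprod HC HE1 HE2.
have HK := c0_inMK HC.
have HEE0 : inM (tprod pt E E) := c0_inMprod HC HE HE.
have HEE : inM (tprod pt (tprod pt E E) (Ktm OK)) := c0_inMprod HC HEE0 HK.
set EE := tprod pt (tprod pt E E) (Ktm OK).
have hx : C0 EE E Defs.setT (fun p => p.1.1) := c0_TT HC (c0_fst HC HEE0 HK) (c0_fst HC HE HE).
have hv : C0 EE E Defs.setT (fun p => p.1.2) := c0_TT HC (c0_fst HC HEE0 HK) (c0_snd HC HE HE).
have ht : C0 EE (Ktm OK) Defs.setT (fun p => p.2) := c0_snd HC HEE0 HK.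
have hx1 : C0 EE E1 Defs.setT (fun p => p.1.1.1) := c0_TT HC hx (c0_fst HC HE1 HE2).
have hx2 : C0 EE E2 Defs.setT (fun p => p.1.1.2) := c0_TT HC hx (c0_snd HC HE1 HE2).
have hv1 : C0 EE E1 Defs.setT (fun p => p.1.2.1) := c0_TT HC hv (c0_fst HC HE1 HE2).
have hv2 : C0 EE E2 Defs.setT (fun p => p.1.2.2) := c0_TT HC hv (c0_snd HC HE1 HE2).
have ha : C0 EE E1 Defs.setT (fun p => p.1.1.1 + p.2 *: p.1.2.1) :=
  c0_addm HC hx1 (c0_scalem HC ht hv1).
have g1 := c0_compT HC (c0_pair HC (c0_pair HC hx hv1) ht) HD1.
have g2 := c0_compT HC (c0_pair HC (c0_pair HC (c0_pair HC ha hx2) hv2) ht) HD2.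
pose W (p : tcar EE) := U p.1.1 /\ U (p.1.1.1 + p.2 *: p.1.2.1, p.1.1.2) /\
   U (p.1.1.1 + p.2 *: p.1.2.1, p.1.1.2 + p.2 *: p.1.2.2).
have HWo : topen EE W.
  apply: (open_ext (open_and HC HEE (c0_open HC g1) (c0_open HC g2))) => p /=; rewrite /W; tauto.
pose g (p : tcar EE) := D1 ((p.1.1, p.1.2.1), p.2) +
   D2 (((p.1.1.1 + p.2 *: p.1.2.1, p.1.1.2), p.1.2.2), p.2).
have Hg : C0 EE F W g.
  apply: (c0_addm HC); [apply: (c0_restrict HC g1 HWo) | apply: (c0_restrict HC g2 HWo)];
  move=> p; rewrite /W /=; tauto.
pose Q (p : tcar EE) := p.2 != 0 /\ U p.1.1 /\ U (p.1.1 + p.2 *: p.1.2).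
pose q (p : tcar EE) := p.2^-1 *: (f (p.1.1 + p.2 *: p.1.2) - f p.1.1).
have hxtv : C0 EE E Defs.setT (fun p => p.1.1 + p.2 *: p.1.2) := c0_addm HC hx (c0_scalem HC ht hv).
have q1 := c0_compT HC ht (c0_inv HC).
have q2 := c0_compT HC hxtv Hf.
have q3 := c0_compT HC hx Hf.
have HQo : topen EE Q.
  apply: (open_ext (open_and HC HEE (open_and HC HEE (c0_open HC q1) (c0_open HC q2)) (c0_open HC q3))) => p /=;
  rewrite /Q; tauto.
have Hq : C0 EE F Q q.
  apply: (c0_scalem HC); last apply: (c0_subm HC).
  - by apply: (c0_restrict HC q1 HQo); move=> p [? _].
  - by apply: (c0_restrict HC q2 HQo); move=> p [_ [_ ?]].
  - by apply: (c0_restrict HC q3 HQo); move=> p [_ [? _]].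
have Hgq : forall p, W p -> p.2 != 0 -> g p = q p.
  move=> [[[x1 x2] [v1 v2]] t] [H1 [H2 H3]] /= tn0.
  rewrite /g /q /= HD1eq // HD2eq //.
  rewrite -scalerDr; congr (_ *: _).
  rewrite addrC addrA subrK //.
have HWU1 : forall p, W p -> U1 U p.
  move=> [[[x1 x2] [v1 v2]] t] [H1 [H2 H3]]; split; [exact: H1 | exact: H3].
pose f1 (p : tcar EE) := if excluded_middle_informative (W p) then g p else q p.
have Hf1 : C0 EE F (U1 U) f1.
  apply: (c0_local HC (I := bool) (Ui := fun b => if b then W else Q) HEE HF).
  - by case.
  - move=> [[[x1 x2] [v1 v2]] t]; split.
    + move=> [H1 H2]; case: (eqVneq t 0) => [t0|tn0].
      * exists true; subst t; rewrite /W /= !scale0r !addr0; by split.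
      * by exists false; split.
    + by move=> [[|] /= HH]; [apply: HWU1 | case: HH => _ ?].
  - case.
    + apply: (c0_ext HC Hg) => p Wp; rewrite /f1; by case: excluded_middle_informative.
    + apply: (c0_ext HC Hq) => p [tn0 Qp]; rewrite /f1.
      case: excluded_middle_informative => // Wp; by rewrite Hgq.
split.
  split; first exact: Hf.
  exists f1; split; first exact: Hf1.
  move=> x v t [H1 H2]; case: (eqVneq t 0) => [->|tn0].
    by rewrite scale0r addr0 subrr scale0r.
  have -> : f1 ((x, v), t) = q ((x, v), t).
    rewrite /f1; case: excluded_middle_informative => // Wp; by rewrite Hgq.
  by rewrite /q /= scalerA mulfV // scale1r.
move=> f1' [Hf1' Hid] x1 v1 x2 v2 t HU1 Ha.
pose c : tcar (tprod pt E E) := ((x1, x2), (v1, v2)).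
have hin := c0_inr HC c HEE0 HK.
have a1 := c0_compT HC hin Hf1'.
have a2 := c0_compT HC hin Hg.
pose S := fun s : K => W (c, s).
have HSo : topen (Ktm OK) S.
  apply: (open_ext (c0_open HC a2)) => s; rewrite /S; tauto.
have HS : S t by rewrite /S /W /=; case: HU1 => H1 H2; split; [exact H1|split; [exact Ha| exact H2]].
apply: (c0_det HC (U := S) (f := fun s => f1' (c, s)) (g := fun s => g (c, s)) _ _ _ HS).
- by apply: (c0_restrict HC a1 HSo) => s /HWU1.
- by apply: (c0_restrict HC a2 HSo) => s.
- move=> s Ss sn0; rewrite Hgq //.
  have Hd := Hid (x1, x2) (v1, v2) s (HWU1 _ Ss).
  rewrite /q /= Hd scalerA mulVf // scale1r //.
Qed.
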